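(* Let $q=2^n$ and $k\ge0$, and regard $D_k$ as a map ${\mathbb F}_q\to{\mathbb F}_q$. (i) $D_k(\mathcal T_1)=\{0\}$ iff $q+1$ divides $k$. If $q>2$, then $D_k(\mathcal T_0)=\{0\}$ iff $q-1$ divides $k$. (ii) $D_k(b)=b^2$ for all $b\in\mathcal T_1$ iff $k\equiv\pm2\pmod{q+1}$. If $q>2$, then $D_k(a)=a^2$ for all $a\in\mathcal T_0$ iff $k\equiv\pm2\pmod{q-1}$. (iii) Let $e\ge0$. If $e$ is even, then $D_{q^e-1}(a)=0$ and $D_{q^e+1}(a)=a^2$ for all $a\in{\mathbb F}_q$. If $e$ is odd, then $D_{q^e-1}(a)=0$ for $a\in\mathcal T_0\cup\{0\}$ and $=a^2$ for $a\in\mathcal T_1$, while $D_{q^e+1}(a)=a^2$ for $a\in\mathcal T_0\cup\{0\}$ and $=0$ for $a\in\mathcal T_1$.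
   Context: $D_k\in\mathbb Z[x]$: $D_0=2$, $D_1=x$, $D_{k+2}=xD_{k+1}-D_k$ (so $D_k(u+1/u)=u^k+u^{-k}$); over ${\mathbb F}_q$ with $q$ even, $D_0=0$. For $j\in\{0,1\}$, $\mathcal T_j=\{a\in{\mathbb F}_q^\times:\mathrm{Tr}_{{\mathbb F}_q/{\mathbb F}_2}(1/a)=j\}$. *)

(* Defs.v *)
From HB Require Import structures.
From mathcomp Require Import all_boot all_order all_algebra all_field.
Set Implicit Arguments. Unset Strict Implicit. Unset Printing Implicit Defensive.
Import Order.TTheory GRing.Theory.
Local Open Scope ring_scope.

(* Dickson-type polynomials D_k over an arbitrary ring R:
   D_0 = 2, D_1 = x, D_(k+2) = x D_(k+1) - D_k.  Over Z these are the D_k of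
   the paper; over R they are the images of those under Z -> R. *)
Fixpoint Dpair (R : nzRingType) (k : nat) : {poly R} * {poly R} :=
  match k with
  | 0 => (2%:R%:P, 'X)
  | k'.+1 => let p := Dpair R k' in (p.2, 'X * p.2 - p.1)
  end.

Definition Dpoly (R : nzRingType) (k : nat) : {poly R} := (Dpair R k).1.

Definition tr2 (F : finFieldType) (n : nat) (x : F) : F :=
  \sum_(i < n) x ^+ (2 ^ i).

Definition Tset (F : finFieldType) (n : nat) (j : bool) : {set F} :=
  [set a : F | (a != 0) && (tr2 n a^-1 == (j : nat)%:R)].

(* Main.v *)
Require Import Defs.
From HB Require Import structures.
From mathcomp Require Import all_boot all_order all_algebra all_field.
From mathcomp Require Import ring lra zify.
Set Implicit Arguments. Unset Strict Implicit. Unset Printing Implicit Defensive.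
Import GRing.Theory.
Local Open Scope ring_scope.

Section Char2.
Variable F : finFieldType.
Hypothesis ch2 : (2%N \in [pchar F]).

Definition dd (a : F) k := (Dpoly F k).[a].

Lemma Dpoly_SS k : Dpoly F k.+2 = 'X * Dpoly F k.+1 - Dpoly F k.
Proof. by []. Qed.

Lemma two0 : 2%:R = 0 :> F.
Proof. by move: ch2 => /andP[_ /eqP]. Qed.

Lemma Dpoly0 : Dpoly F 0 = 0.
Proof. by rewrite /Dpoly /= two0. Qed.

Lemma dd0 a : dd a 0 = 0.
Proof. by rewrite /dd Dpoly0 horner0. Qed.

Lemma dd1 a : dd a 1 = a.
Proof. by rewrite /dd /Dpoly /= hornerX. Qed.

Lemma ddSS a k : dd a k.+2 = a * dd a k.+1 + dd a k.
Proof. by rewrite /dd Dpoly_SS hornerD hornerN (oppr_pchar2 ch2) [X in X.[a]]mulrC hornerMX mulrC. Qed.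

Lemma dd_zero k : dd 0 k = 0.
Proof.
elim: k {-2}k (leqnn k) => [|n IH] [|[|k]] hk; rewrite ?dd0 ?dd1 //.
by rewrite ddSS mul0r add0r IH //; lia.
Qed.

Lemma sqrD (x y : F) : (x + y) ^+ 2 = x ^+ 2 + y ^+ 2.
Proof. by rewrite sqrrD mulr2n addrr_pchar2 // addr0. Qed.

Lemma char2E (x y z : F) : x = y + 2%:R * z -> x = y.
Proof. by rewrite two0 mul0r addr0. Qed.

Lemma dd_inv a m : dd a m ^+ 2 + a * dd a m * dd a m.+1 + dd a m.+1 ^+ 2 = a ^+ 2.
Proof.
elim: m => [|m IH]; first by rewrite dd0 dd1; ring.
rewrite ddSS -{}IH; apply: (char2E (z := a^+2 * dd a m.+1 ^+ 2 + a * dd a m * dd a m.+1)).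
ring.
Qed.

Lemma dd_double a m : dd a m.*2 = dd a m ^+ 2 /\ dd a m.*2.+1 = dd a m * dd a m.+1 + a.
Proof.
elim: m => [|m [IH1 IH2]]; first by rewrite dd0 dd1 expr0n mul0r add0r.
have E1 : dd a m.+1.*2 = dd a m.+1 ^+ 2.
  rewrite doubleS ddSS IH1 IH2; have := dd_inv a m.
  move=> H; apply: (char2E (z := a * dd a m * dd a m.+1 + dd a m ^+ 2)).
  rewrite mulrDr -(expr2 a) -H; ring.
split => //.
rewrite doubleS ddSS -doubleS E1 IH2 [dd a m.+2]ddSS; ring.
Qed.

Lemma dd_pow2 a n : dd a (2 ^ n) = a ^+ (2 ^ n).
Proof.
elim: n => [|n IH]; first by rewrite dd1.
by rewrite expnS mul2n (dd_double a _).1 IH -exprM muln2.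
Qed.

Lemma tr2S (x : F) n : tr2 n.+1 x = tr2 n x + x ^+ (2 ^ n).
Proof. by rewrite /tr2 big_ord_recr. Qed.

Lemma dd_pow2m1 a n : a != 0 -> dd a (2 ^ n).-1 = a ^+ (2 ^ n).+1 * (tr2 n a^-1) ^+ 2.
Proof.
move=> a0; elim: n => [|n IH]; first by rewrite dd0 /tr2 big_ord0 expr0n mulr0.
have e : (2 ^ n.+1).-1 = ((2 ^ n).-1).*2.+1.
  by rewrite expnS; have := (expn_gt0 2%N n); lia.
have e2 : ((2 ^ n).-1).+1 = (2 ^ n)%N by rewrite prednK // expn_gt0.
rewrite e (dd_double a _).2 e2 IH dd_pow2 tr2S sqrD.
rewrite expnSr !exprSr exprM exprVn.
have b0 : a ^+ (2 ^ n) != 0 by rewrite expf_neq0.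
move: b0; set b := a ^+ (2 ^ n); set t := tr2 n a^-1 => b0.
by field.
Qed.

Section Per.
Variables (a : F) (m : nat).
Hypotheses (hm0 : dd a m = 0) (hm1 : dd a m.+1 = a).

Lemma dd_period k : dd a (k + m) = dd a k.
Proof.
elim: k {-2}k (leqnn k) => [|n IH] [|[|k]] hk; rewrite ?add0n ?dd0 ?dd1 ?add1n //.
rewrite !addSn !ddSS -addSn !IH //; lia.
Qed.

Lemma dd_mod k : dd a k = dd a (k %% m)%N.
Proof.
rewrite {1}(divn_eq k m); elim: (k %/ m)%N => [|q IH]; first by rewrite mul0n add0n.
by rewrite mulSn -addnA addnC dd_period.
Qed.

Lemma dd_eqmod k1 k2 : (k1 = k2 %[mod m])%N -> dd a k1 = dd a k2.
Proof. by move=> e; rewrite dd_mod e -dd_mod. Qed.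

Lemma dd_sym j : (0 < m)%N -> (j <= m)%N -> dd a (m - j) = dd a j.
Proof.
move=> m0.
have hm' : dd a m.-1 = a.
  by move: hm1; rewrite -{1}(prednK m0) ddSS (prednK m0) hm0 mulr0 add0r.
elim: j {-2}j (leqnn j) => [|n IH] [|[|j]] hj hjm; rewrite ?subn0 ?dd0 ?dd1 ?subn1 //.
have e : (m - j = (m - j.+2).+2)%N by lia.
have e1 : ((m - j.+2).+1 = m - j.+1)%N by lia.
have H2 : dd a (m - j.+2) = dd a (m - j) + a * dd a (m - j.+1).
  rewrite e -e1 ddSS; apply/esym; apply: (char2E (z := a * dd a (m - j.+2).+1)); ring.
rewrite H2 !IH; try lia.
by rewrite [RHS]ddSS addrC.
Qed.
End Per.

Lemma Dpoly_monic k : (size (Dpoly F k) <= k.+1)%N /\ Dpoly F k.+1 \is monic /\ size (Dpoly F k.+1) = k.+2.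
Proof.
elim: k => [|k [IH0 [IH1 IH2]]].
  by rewrite Dpoly0 size_poly0; split => //; rewrite /Dpoly /= monicX size_polyX.
have hp : Dpoly F k.+1 != 0 by rewrite -size_poly_eq0 IH2.
have sX : size ('X * Dpoly F k.+1) = k.+3 by rewrite mulrC size_mulX // IH2.
have lt : (size (- Dpoly F k)%R < size ('X * Dpoly F k.+1)%R)%N.
  by rewrite size_opp sX; apply: leq_trans IH0 _.
rewrite IH2; split => //.
rewrite Dpoly_SS; split.
  by rewrite monicE lead_coefDl // mulrC lead_coefMX -monicE.
by rewrite size_addl.
Qed.

Lemma roots_card (S : {set F}) (p : {poly F}) : (0 : F) \notin S -> p != 0 ->
  root p 0 -> (forall b, b \in S -> root p b) -> (#|S|.+1 < size p)%N.
Proof.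
move=> S0 p0 r0 rS.
have := max_poly_roots p0 (rs := enum (0 |: S)).
rewrite -cardE cardsU1 S0 add1n; apply; last exact: enum_uniq.
apply/allP => x; rewrite mem_enum in_setU1 => /orP[/eqP -> //|]; exact: rS.
Qed.

Lemma generic (S : {set F}) (m : nat) :
  (0 : F) \notin S -> (0 < #|S|)%N -> (2 < m)%N -> (m <= (#|S|).*2.+1)%N ->
  (forall b, b \in S -> dd b m = 0 /\ dd b m.+1 = b) ->
  (forall k, (forall b, b \in S -> dd b k = 0) <-> (m %| k)%N) /\
  (forall k, (forall b, b \in S -> dd b k = b ^+ 2) <->
     ((k == 2 %[mod m]) || (k + 2 == 0 %[mod m]))%N).
Proof.
move=> S0 Sgt0 m2 mS hper.
have m0 : (0 < m)%N by lia.
have red : forall k, exists r', [/\ forall b, b \in S -> dd b k = dd b r',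
   (r' <= #|S|)%N, (r' = 0 -> m %| k)%N & (r' = 2 -> (k == 2 %[mod m]) || (k + 2 == 0 %[mod m]))%N].
  move=> k; have rm : (k %% m < m)%N by rewrite ltn_pmod.
  have hk : forall b, b \in S -> dd b k = dd b (k %% m)%N.
    by move=> b /hper [h0 h1]; apply: dd_mod.
  case: (leqP (k %% m).*2 m) => hr.
    exists (k %% m)%N; split => //; first by lia.
      by move=> e; rewrite /dvdn e.
    by move=> e; rewrite e modn_small.
  exists (m - k %% m)%N; split.
  - by move=> b bS; rewrite hk // dd_sym //; [case: (hper b bS)|case: (hper b bS)|lia].
  - lia.
  - lia.
  - move=> e; apply/orP; right; rewrite -modnDml.
    have -> : (k %% m + 2 = m)%N by lia.
    by rewrite modnn mod0n.
split.
  move=> k; split.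
    move=> H; have [r' [hr rS r0 _]] := red k.
    case: r' hr rS r0 => [|r'] hr rS r0; first exact: r0.
    exfalso.
    have := @roots_card S (Dpoly F r'.+1) S0.
    have [_ [mon sz]] := Dpoly_monic r'.
    rewrite sz; move/(_ (monic_neq0 mon)).
    have -> : root (Dpoly F r'.+1) 0 by apply/eqP; exact: dd_zero.
    move/(_ isT) => /(_ _) H2.
    have : (#|S|.+1 < r'.+2)%N.
      by apply: H2 => b bS; apply/eqP; rewrite -/(dd b r'.+1) -hr // H.
    lia.
  move=> /dvdnP [c ->] b bS; have [h0 h1] := hper b bS.
  by rewrite (dd_mod h0 h1) modnMl dd0.
move=> k; split; last first.
  move=> /orP[] /eqP e b bS; have [h0 h1] := hper b bS.
    by rewrite (dd_eqmod h0 h1 e) ddSS dd1 dd0 addr0 expr2.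
  have e2 : (k = m - 2 %[mod m])%N.
    apply/eqP; rewrite -(eqn_modDr 2) subnK; last lia. by rewrite modnn e mod0n.
  by rewrite (dd_eqmod h0 h1 e2) dd_sym // ?ddSS ?dd1 ?dd0 ?addr0 ?expr2 //; lia.
move=> H.
case: (ltnP 1 #|S|) => hS; last first.
  have m3 : m = 3%N by lia.
  have [b bS] : exists b, b \in S by apply/card_gt0P.
  have b1 : b = 1.
    have [h0 _] := hper b bS; move: h0; rewrite m3 ddSS ddSS dd1 dd0 addr0.
    have bn0 : b != 0 by apply: contraNneq S0 => <-.
    move=> h; have hb2 : b * b = 1.
      have : b * (b * b + 1) = 0 by rewrite -h; ring.
      move/eqP; rewrite mulf_eq0 (negbTE bn0) /= addr_eq0 (oppr_pchar2 ch2).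
      by move/eqP.
    have : (b - 1) ^+ 2 = 0.
      rewrite sqrrB1 expr2 hb2 (oppr_pchar2 ch2) mulr2n addrr_pchar2 // addr0.
      by rewrite addrr_pchar2.
    by move/eqP; rewrite expf_eq0 /= subr_eq0 => /eqP.
  have := H b bS; subst b; rewrite m3 expr1n.
  have [h0 h1] := hper 1 bS; rewrite (dd_mod h0 h1) m3.
  have : (k %% 3 < 3)%N by rewrite ltn_pmod.
  rewrite -modnDml.
  case: (k %% 3)%N => [|[|[|r]]] //= _.
  by rewrite dd0 => /eqP; rewrite eq_sym oner_eq0.
have [r' [hr rS _ r2]] := red k.
case: (eqVneq r' 2) => [/r2 //|rn2].
exfalso.
have [s1 _] := Dpoly_monic r'.
have p0 : Dpoly F r' - 'X^2 != 0.
  rewrite subr_eq0; apply/eqP => e.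
  move: rn2 e; case: r' {hr rS r2 s1} => [|r'].
    by rewrite Dpoly0 => _ /esym/eqP; rewrite expf_eq0 polyX_eq0 andbF.
  move=> rn2 e; have := size_polyXn F 2; rewrite -e.
  by case: (Dpoly_monic r') => _ [_ ->] [] e'; move: rn2; rewrite e'.
have := @roots_card S _ S0 p0.
rewrite /root !hornerE -/(dd 0 r') dd_zero expr0n /= subr0 eqxx => /(_ isT).
have : (size (Dpoly F r' - 'X^2)%R <= maxn r'.+1 3)%N.
  apply: leq_trans (size_polyD _ _) _; rewrite size_polyN size_polyXn.
  by rewrite geq_max leq_max s1 /= leq_max leqnn orbT.
move=> sp H2.
have : (#|S|.+1 < size (Dpoly F r' - 'X^2)%R)%N.
  apply: H2 => b bS; rewrite /root !hornerE -/(dd b r') -hr // H // subrr //.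
lia.
Qed.
End Char2.

Lemma tr_count (F : finFieldType) n (n0 : (0 < n)%N) (c : F) :
  (#|[set y : F | tr2 n y == c]| <= 2 ^ n.-1)%N.
Proof.
set h := (2 ^ n.-1)%N.
set P : {poly F} := \sum_(i < n) 'X^(2 ^ i) - c%:P.
have hP : forall y, P.[y] = tr2 n y - c.
  move=> y; rewrite /P hornerD hornerN hornerC horner_sum /tr2.
  by congr (_ - _); apply: eq_bigr => i _; rewrite hornerXn.
have i0 : (n.-1 < n)%N by rewrite prednK.
have cP : P`_h = 1.
  rewrite /P coefB coefC (_ : (h == 0)%N = false); last by rewrite /h expn_eq0.
  rewrite subr0 coef_sum (bigD1 (Ordinal i0)) //= coefXn eqxx big1 ?addr0 //.
  move=> i ni; rewrite coefXn /h eqn_exp2l // (_ : (n.-1 == i) = false) //.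
  by apply/negbTE; apply: contra ni => /eqP e; apply/eqP/val_inj; rewrite /= e.
have P0 : P != 0 by apply/eqP => e; move: cP; rewrite e coef0 => /eqP; rewrite eq_sym oner_eq0.
have sP : (size P <= h.+1)%N.
  apply/leq_sizeP => j hj; rewrite /P coefB coefC (_ : (j == 0)%N = false); last by case: j hj.
  rewrite subr0 coef_sum big1 // => i _; rewrite coefXn (_ : (j == 2 ^ i)%N = false) //.
  apply/negbTE; rewrite neq_ltn; apply/orP; right.
  apply: leq_ltn_trans hj; rewrite /h leq_exp2l //; have := ltn_ord i; lia.
have := max_poly_roots P0 (rs := enum [set y : F | tr2 n y == c]).
rewrite -cardE enum_uniq; move=> H.
have : (#|[set y : F | tr2 n y == c]| < size P)%N.
  apply: H => //; apply/allP => y; rewrite mem_enum inE => /eqP e.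
  by rewrite /root hP e subrr.
move=> H2; rewrite -ltnS; exact: leq_trans H2 sP.
Qed.

Lemma tr01 (F : finFieldType) n (ch2 : (2%N \in [pchar F])) (hq : #|F| = (2 ^ n)%N) (x : F) :
  tr2 n x = 0 \/ tr2 n x = 1.
Proof.
have xq : x ^+ (2 ^ n) = x by rewrite -hq expf_card.
have sq : tr2 n x ^+ 2 = tr2 n x.
  have z2 : (0 : F) ^+ 2 = 0 by rewrite expr0n.
  rewrite /tr2 (big_morph (fun y : F => y ^+ 2) (sqrD ch2) z2).
  have e1 := tr2S x n; rewrite xq /tr2 big_ord_recl /= in e1.
  under eq_bigr do rewrite -exprM -expnSr.
  by apply: (addIr x); rewrite -e1 addrC.
have : tr2 n x * (tr2 n x - 1) = 0 by rewrite mulrBr mulr1 -expr2 sq subrr.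
move/eqP; rewrite mulf_eq0 subr_eq0 => /orP[] /eqP; auto.
Qed.

Lemma img0 (F : finFieldType) (S : {set F}) (f : F -> F) : (0 < #|S|)%N ->
  ([set f x | x in S] == [set 0]) = [forall x in S, f x == 0].
Proof.
move=> /card_gt0P [x0 x0S]; apply/eqP/forall_inP.
  move=> e x xS; have : f x \in [set f x | x in S] by apply: imset_f.
  by rewrite e inE.
move=> H; apply/setP => y; rewrite inE; apply/imsetP/eqP.
  by case=> x xS ->; apply/eqP/H.
by move=> ->; exists x0 => //; apply/esym/eqP/H.
Qed.

Lemma predX_dvd x e : (0 < x)%N -> (x.-1 %| (x ^ e).-1)%N.
Proof.
move=> x0; elim: e => [|e IH]; first by rewrite expn0 dvdn0.
have y0 : (0 < x ^ e)%N by rewrite expn_gt0 x0.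
have -> : ((x ^ e.+1).-1 = x * (x ^ e).-1 + x.-1)%N.
  by rewrite expnS; move: y0; set y := (x ^ e)%N; nia.
by rewrite dvdn_add // dvdn_mull.
Qed.

Lemma mod_facts q e : (1 < q)%N ->
  [/\ ((q ^ e).-1 = 0 %[mod q.-1])%N, ((q ^ e).+1 = 2 %[mod q.-1])%N,
      (~~ odd e -> ((q ^ e).-1 = 0 %[mod q.+1]) /\ ((q ^ e).+1 = 2 %[mod q.+1]))%N &
      (odd e -> ((q ^ e).-1 = q.-1 %[mod q.+1]) /\ ((q ^ e).+1 = 0 %[mod q.+1]))%N].
Proof.
move=> q1.
have y0 : (0 < q ^ e)%N by rewrite expn_gt0; lia.
have eS : ((q ^ e).+1 = (q ^ e).-1 + 2)%N by lia.
have dv : forall d x, (d %| x -> x = 0 %[mod d])%N by move=> d x /eqP ->; rewrite mod0n.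
have h1 : ((q ^ e).-1 = 0 %[mod q.-1])%N by apply/dv/predX_dvd; lia.
have dq : (q.+1 %| (q ^ 2).-1)%N.
  have -> : ((q ^ 2).-1 = q.-1 * q.+1)%N by rewrite expnS expn1; nia.
  exact: dvdn_mull.
have hev : forall f, ((q ^ f.*2).-1 = 0 %[mod q.+1])%N.
  move=> f; apply/dv; apply: dvdn_trans dq _.
  by rewrite -mul2n expnM predX_dvd // expn_gt0; lia.
split => //.
- by rewrite eS -modnDml h1 modnDml.
- move=> ev.
  have ee : e = (e./2).*2 by rewrite -{1}(odd_double_half e) (negbTE ev).
  have h2 : ((q ^ e).-1 = 0 %[mod q.+1])%N by rewrite ee; exact: hev.
  by split => //; rewrite eS -modnDml h2 modnDml.
- move=> od.
  have e2 : ((q ^ e).+1 = 0 %[mod q.+1])%N.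
    rewrite -(odd_double_half e) od add1n expnS.
    have z0 : (0 < q ^ (e./2).*2)%N by rewrite expn_gt0; lia.
    have -> : (q * q ^ (e./2).*2).+1 = (q * (q ^ (e./2).*2).-1 + q.+1)%N.
      by move: z0; set z := (q ^ (e./2).*2)%N; nia.
    by rewrite -modnDm -modnMmr hev muln0 mod0n modnn mod0n.
  split => //.
  apply/eqP; rewrite -(eqn_modDr 2) -eS; apply/eqP.
  by rewrite e2 (_ : (q.-1 + 2 = q.+1)%N) ?modnn //; lia.
Qed.

Unset Implicit Arguments.
Theorem proposition3p3 (F : finFieldType) (n : nat) (hq : #|F| = (2 ^ n)%N) :
  let q := (2 ^ n)%N in
  let D := fun (k : nat) (a : F) => (Dpoly F k).[a] in
  let T0 := Tset F n false in
  let T1 := Tset F n true in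
  (* (i) *)
  (forall k : nat,
     ([set D k b | b in T1] == [set 0]) = (q.+1 %| k)%N) /\
  ((2 < q)%N -> forall k : nat,
     ([set D k a | a in T0] == [set 0]) = (q.-1 %| k)%N) /\
  (* (ii) *)
  (forall k : nat,
     (forall b, b \in T1 -> D k b = b ^+ 2) <->
     ((k == 2 %[mod q.+1]) || (k + 2 == 0 %[mod q.+1]))%N) /\
  ((2 < q)%N -> forall k : nat,
     (forall a, a \in T0 -> D k a = a ^+ 2) <->
     ((k == 2 %[mod q.-1]) || (k + 2 == 0 %[mod q.-1]))%N) /\
  (* (iii) *)
  (forall e : nat, ~~ odd e ->
     forall a : F, D (q ^ e).-1 a = 0 /\ D (q ^ e).+1 a = a ^+ 2) /\
  (forall e : nat, odd e ->
     (forall a : F, a \in T0 \/ a = 0 ->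
        D (q ^ e).-1 a = 0 /\ D (q ^ e).+1 a = a ^+ 2) /\
     (forall a : F, a \in T1 ->
        D (q ^ e).-1 a = a ^+ 2 /\ D (q ^ e).+1 a = 0)).
Proof.
move=> q D T0 T1.
have n0 : (0 < n)%N.
  case: n hq {q D T0 T1} => // hq; exfalso.
  by have := max_card (pred2 (0 : F) 1); rewrite card2 hq eq_sym oner_eq0.
set h := (2 ^ n.-1)%N.
have qh : q = h.*2 by rewrite /q /h -mul2n -expnS prednK.
have h1 : (0 < h)%N by rewrite expn_gt0.
have xq : forall x : F, x ^+ q = x by move=> x; rewrite /q -hq expf_card.
have ch2 : (2%N \in [pchar F]).
  apply/andP; split => //.
  have := xq (-1); rewrite qh -mul2n exprM sqrrN !expr1n => e.
  by apply/eqP; rewrite mulr2n {2}e subrr.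
have tr0 : tr2 n (0 : F) = 0.
  by rewrite /tr2 big1 // => i _; rewrite expr0n expn_eq0.
set A0 := [set y : F | tr2 n y == 0].
set A1 := [set y : F | tr2 n y == 1].
have A1C : A1 = ~: A0.
  apply/setP => y; rewrite !inE; case: (tr01 ch2 hq y) => ->.
    by rewrite eqxx eq_sym oner_eq0.
  by rewrite eqxx oner_eq0.
have cA0 : #|A0| = h.
  have := cardsC A0; rewrite -A1C hq -/q qh.
  have := tr_count n0 (0 : F); have := tr_count n0 (1 : F); rewrite -/h -/A0 -/A1.
  lia.
have cA1 : #|A1| = h.
  have := cardsC A0; rewrite -A1C hq -/q qh cA0; lia.
have eT1 : T1 = GRing.inv @^-1: A1.
  apply/setP => a; rewrite /T1 /Tset !inE /=.
  case: (eqVneq a 0) => [->|//]; by rewrite invr0 tr0 eq_sym oner_eq0.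
have eT0 : T0 = GRing.inv @^-1: (A0 :\ 0).
  apply/setP => a; rewrite /T0 /Tset !inE /= invr_eq0 andbC.
  by congr (_ && _).
have cT1 : #|T1| = h by rewrite eT1 card_preimset //; exact: invr_inj.
have cT0 : #|T0| = h.-1.
  rewrite eT0 card_preimset; last exact: invr_inj.
  by move: (cardsD1 0 A0); rewrite cA0 inE tr0 eqxx add1n => ->.
have q0 : (0 < q)%N by rewrite qh; lia.
have Tmem : forall (j : bool) a, a \in Tset F n j -> a != 0 /\ tr2 n a^-1 = j%:R.
  by move=> j a; rewrite inE => /andP[-> /eqP ->].
have key : forall a : F, a != 0 -> [/\ dd a q = a, dd a q.-1 = a ^+ 2 * tr2 n a^-1 ^+ 2
     & dd a q.+1 = a * a + dd a q.-1].
  move=> a a0.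
  have e1 : dd a q = a by rewrite /q (dd_pow2 ch2) -/q xq.
  split => //.
    by rewrite /q (dd_pow2m1 ch2 n a0) -/q exprS xq -expr2.
  by have := ddSS ch2 a q.-1; rewrite (prednK q0) e1.
have per1 : forall b, b \in T1 -> dd b q.+1 = 0 /\ dd b q.+2 = b.
  move=> b /Tmem [b0 tb]; have [k1 k2 k3] := key b b0.
  rewrite k3 k2 tb expr1n mulr1 -expr2 addrr_pchar2 //; split => //.
  by rewrite ddSS // k3 k2 tb expr1n mulr1 -expr2 addrr_pchar2 // mulr0 add0r k1.
have per0 : forall a, a \in T0 -> dd a q.-1 = 0 /\ dd a q.-1.+1 = a.
  move=> a /Tmem [a0 ta]; have [k1 k2 k3] := key a a0.
  by rewrite k2 ta expr0n mulr0 (prednK q0) k1.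
have T10 : (0 : F) \notin T1 by rewrite inE eqxx.
have T00 : (0 : F) \notin T0 by rewrite inE eqxx.
have G1 := generic ch2 T10 (ltac:(rewrite cT1 //)) (ltac:(rewrite qh; lia) : (2 < q.+1)%N)
   (ltac:(rewrite cT1 qh //) : (q.+1 <= (#|T1|).*2.+1)%N) per1.
have G0 : (2 < q)%N -> _ := fun q2 => generic ch2 T00 (ltac:(rewrite cT0; move: q2; rewrite qh; lia))
   (ltac:(move: q2; rewrite qh; lia) : (2 < q.-1)%N)
   (ltac:(rewrite cT0 qh; lia) : (q.-1 <= (#|T0|).*2.+1)%N) per0.
have dd2 : forall a : F, dd a 2 = a ^+ 2 by move=> a; rewrite (ddSS ch2) dd1 (dd0 ch2) addr0 expr2.
have q1 : (1 < q)%N by rewrite qh; lia.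
have cases : forall a : F, [\/ a = 0, a \in T0 | a \in T1].
  move=> a; case: (eqVneq a 0) => [->|a0]; first by constructor 1.
  rewrite !inE a0 /=; case: (tr01 ch2 hq a^-1) => ->; rewrite eqxx.
    by constructor 2.
  by constructor 3.
split.
  move=> k; rewrite img0; last by rewrite cT1.
  apply/forall_inP/idP => H.
    by apply/(G1.1 k) => b bS; apply/eqP/H.
  by move=> b bS; apply/eqP; exact: (G1.1 k).2 H b bS.
split.
  move=> q2 k; rewrite img0; last by rewrite cT0; move: q2; rewrite qh; lia.
  apply/forall_inP/idP => H.
    by apply/((G0 q2).1 k) => b bS; apply/eqP/H.
  by move=> b bS; apply/eqP; exact: ((G0 q2).1 k).2 H b bS.
split; first exact: G1.2.
split; first by move=> q2; exact: (G0 q2).2.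
have dE : forall k a, D k a = dd a k by [].
have caseT0 : forall e a, a \in T0 -> D (q ^ e).-1 a = 0 /\ D (q ^ e).+1 a = a ^+ 2.
  move=> e a aT0; have [m1 m2 _ _] := mod_facts e q1; have [h0 h1'] := per0 a aT0.
  by rewrite !dE (dd_eqmod ch2 h0 h1' m1) (dd_eqmod ch2 h0 h1' m2) (dd0 ch2) dd2.
have case0 : forall k, D k 0 = 0 by move=> k; rewrite dE (dd_zero ch2).
split.
  move=> e ev a; have [_ _ m3 _] := mod_facts e q1; have [m3a m3b] := m3 ev.
  case: (cases a) => [->|aT0|aT1].
  - by rewrite !case0 expr0n.
  - exact: caseT0.
  - have [h0 h1'] := per1 a aT1.
    by rewrite !dE (dd_eqmod ch2 h0 h1' m3a) (dd_eqmod ch2 h0 h1' m3b) (dd0 ch2) dd2.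
move=> e od; split.
  move=> a [aT0|->]; first exact: caseT0.
  by rewrite !case0 expr0n.
move=> a aT1; have [_ _ _ m4] := mod_facts e q1; have [m4a m4b] := m4 od.
have [h0 h1'] := per1 a aT1.
have [a0 ta] := Tmem _ _ aT1; have [_ k2 _] := key a a0.
by rewrite !dE (dd_eqmod ch2 h0 h1' m4a) (dd_eqmod ch2 h0 h1' m4b) (dd0 ch2) k2 ta expr1n mulr1.
Qed.
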